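(* Let $\mathbf{Z}\in\mathbb{R}^{n\times m}$ with $\boldsymbol\Sigma=\mathbf{Z}^\top\mathbf{Z}$ invertible, and let $\tilde{\mathbf{Z}}$ be a GKnockoff matrix of $\mathbf{Z}$, i.e. $\tilde{\mathbf{Z}}=\mathbf{Z}(\mathbf{I}-\boldsymbol\Sigma^{-1}\operatorname{diag}\{\mathbf{s}\})+\tilde{\mathbf{U}}\mathbf{C}$ where $\mathbf{s}\in\mathbb{R}^m_+$, $\tilde{\mathbf{U}}$ lies in the null space of $\mathbf{Z}$ (i.e. $\mathbf{Z}^\top\tilde{\mathbf{U}}=\mathbf{0}$) and $\mathbf{C}$ is the Cholesky factor of $2\operatorname{diag}\{\mathbf{s}\}-\operatorname{diag}\{\mathbf{s}\}\boldsymbol\Sigma^{-1}\operatorname{diag}\{\mathbf{s}\}$. If $\mathbf{M}\in\mathbb{R}^{n\times n}$ is symmetric with $\mathbf{M}\mathbf{Z}=\mathbf{Z}$, then $\tilde{\mathbf{Z}}^M=\mathbf{M}\tilde{\mathbf{Z}}$ is also a GKnockoff matrix of $\mathbf{Z}$ (of the same form, with $\tilde{\mathbf{U}}$ replaced by $\mathbf{M}\tilde{\mathbf{U}}$, which lies in the null space of $\mathbf{Z}$). *)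

(* Defs.v *)
From mathcomp Require Import all_boot all_order all_algebra.
Set Implicit Arguments. Unset Strict Implicit. Unset Printing Implicit Defensive.
Import Order.TTheory GRing.Theory Num.Theory.
Local Open Scope ring_scope.

Definition is_cholesky (R : realFieldType) (m : nat) (C A : 'M[R]_m) : Prop :=
  (forall i j : 'I_m, (j < i)%N -> C i j = 0) /\
  (forall i : 'I_m, 0 <= C i i) /\
  C^T *m C = A.

Definition gknockoff_form (R : realFieldType) (n m : nat)
    (Z : 'M[R]_(n, m)) (s : 'rV[R]_m) (U : 'M[R]_(n, m)) (C : 'M[R]_m)
    (Zt : 'M[R]_(n, m)) : Prop :=
  let Sigma := Z^T *m Z in
  let D := diag_mx s in
  (forall i : 'I_m, 0 <= s 0 i) /\
  Z^T *m U = 0 /\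
  is_cholesky C (2%:R *: D - D *m invmx Sigma *m D) /\
  Zt = Z *m (1%:M - invmx Sigma *m D) + U *m C.

Definition is_gknockoff (R : realFieldType) (n m : nat)
    (Z Zt : 'M[R]_(n, m)) : Prop :=
  exists s U C, gknockoff_form Z s U C Zt.

(* Main.v *)
Require Import Defs.
From mathcomp Require Import all_boot all_order all_algebra.
Import Order.TTheory GRing.Theory Num.Theory.
Local Open Scope ring_scope.

Theorem lemmaS1 (R : realFieldType) (n m : nat)
    (Z : 'M[R]_(n, m)) (s : 'rV[R]_m) (U : 'M[R]_(n, m)) (C : 'M[R]_m)
    (Zt : 'M[R]_(n, m)) (M : 'M[R]_n) :
  (Z^T *m Z) \in unitmx ->
  gknockoff_form Z s U C Zt ->
  M^T = M ->
  M *m Z = Z ->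
  Z^T *m (M *m U) = 0 /\
  gknockoff_form Z s (M *m U) C (M *m Zt) /\
  is_gknockoff Z (M *m Zt).
Proof.
move=> _ [hs [hU [hC hZt]]] hM hMZ.
have hZM : Z^T *m M = Z^T by rewrite -hM -trmx_mul hMZ.
have h1 : Z^T *m (M *m U) = 0 by rewrite mulmxA hZM.
have h2 : gknockoff_form Z s (M *m U) C (M *m Zt).
  split; first exact: hs.
  split; first exact: h1.
  split; first exact: hC.
  by rewrite hZt mulmxDr !mulmxA hMZ.
split; first exact: h1.
split; first exact: h2.
by exists s, (M *m U), C.
Qed.
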